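(* Let $(X,A)$ be an affinity space, let $\tau_A$ be the topology induced by $A$, and for $\lambda>0$ let $\tau_\lambda$ be the topology induced by the thresholded affinity $A^\lambda$. Let $\kappa(\lambda)$ be the number (cardinality) of connected components of $(X,\tau_\lambda)$ and $\kappa_A$ the number of connected components of $(X,\tau_A)$. Then: (a) if $0<\lambda_1<\lambda_2$, then $\tau_{\lambda_1}\subseteq\tau_{\lambda_2}\subseteq\tau_A$; (b) $\lambda\mapsto\kappa(\lambda)$ is nondecreasing on $(0,\infty)$ and $\kappa(\lambda)\le\kappa_A$ for every $\lambda>0$; (c) if $X$ is finite, then there exists $\Lambda>0$ such that for all $\lambda>\Lambda$ we have $\tau_\lambda=\tau_A$ and $\kappa(\lambda)=\kappa_A$.
   Context: An affinity on a set $X$ is a function $A:X\times X\to(0,+\infty]$ such that $A(x_1,x_2)=A(x_2,x_1)$ for all $x_1,x_2\in X$ and $A(x,x)=+\infty$ for all $x\in X$ (values $+\infty$ off the diagonal are allowed); $(X,A)$ is an affinity space. For $x\in X$, $\alpha>0$ let $E(x,\alpha)=\{y\in X:A(x,y)>\alpha\}$. The topology induced by $A$ is $\tau_A=\{U\subseteq X:\ \text{for every } x\in U \text{ there is } \alpha>0 \text{ with } E(x,\alpha)\subseteq U\}$. For $\lambda>0$ the thresholded affinity is $A^\lambda(x,y)=+\infty$ if $A(x,y)>\lambda$ and $A^\lambda(x,y)=A(x,y)$ if $A(x,y)\le\lambda$; it is again an affinity, and $\tau_\lambda$ denotes the topology induced by $A^\lambda$ in the same way. A subset $S$ of a topological space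 is connected if it cannot be covered by two disjoint open sets each meeting $S$; the connected component of $x$ is the union of all connected sets containing $x$. *)

(* Defs.v *)
From mathcomp Require Import all_boot all_order all_algebra.
From mathcomp Require Import all_classical all_reals.
From mathcomp Require Import ereal.
Set Implicit Arguments. Unset Strict Implicit. Unset Printing Implicit Defensive.
Import Order.TTheory GRing.Theory Num.Theory.
Local Open Scope classical_set_scope.
Local Open Scope ring_scope.
Local Open Scope ereal_scope.

Definition is_affinity (R : realType) (X : Type) (A : X -> X -> \bar R) : Prop :=
  (forall x y, 0 < A x y) /\ (forall x y, A x y = A y x) /\ (forall x, A x x = +oo).

Definition Eball (R : realType) (X : Type) (A : X -> X -> \bar R) (x : X) (alpha : R)
  : set X := [set y | alpha%:E < A x y].

Definition aff_open (R : realType) (X : Type) (A : X -> X -> \bar R) (U : set X) : Prop :=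
  forall x, U x -> exists alpha : R, (0 < alpha)%R /\ Eball A x alpha `<=` U.

Definition thresh (R : realType) (X : Type) (A : X -> X -> \bar R) (lambda : R)
  : X -> X -> \bar R :=
  fun x y => if lambda%:E < A x y then +oo else A x y.

Definition top_connected (X : Type) (op : set X -> Prop) (S : set X) : Prop :=
  ~ (exists U V : set X, op U /\ op V /\ U `&` V = set0 /\ S `<=` U `|` V /\
        (U `&` S !=set0) /\ (V `&` S !=set0)).

Definition component (X : Type) (op : set X -> Prop) (x : X) : set X :=
  \bigcup_(S in [set S | top_connected op S /\ S x]) S.

Definition components (X : Type) (op : set X -> Prop) : set (set X) :=
  [set C | exists x, C = component op x].

(* Main.v *)
Require Import Defs.
From mathcomp Require Import all_boot all_order all_algebra.
From mathcomp Require Import all_classical all_reals.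
From mathcomp Require Import ereal.
Import Order.TTheory GRing.Theory Num.Theory.
Local Open Scope classical_set_scope.
Local Open Scope ring_scope.
Local Open Scope card_scope.


Section Helpers.
Variable (R : realType) (X : Type).

Lemma E1 (A : X -> X -> \bar R) (l b : R) x : (b <= l) ->
  Eball (thresh A l) x b `<=` Eball A x b.
Proof.
move=> bl y; rewrite /Eball /thresh /=; case: ifP => // h _.
by apply: (le_lt_trans _ h); rewrite lee_fin.
Qed.

Lemma E2 (A : X -> X -> \bar R) (l b : R) x :
  Eball A x b `<=` Eball (thresh A l) x b.
Proof. by move=> y; rewrite /Eball /thresh /=; case: ifP => // _ _; apply: ltry. Qed.

Lemma E4 (A : X -> X -> \bar R) (l a : R) x :
  Eball (thresh A l) x l `<=` Eball (thresh A l) x a.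
Proof.
by move=> y; rewrite /Eball /thresh /=; case: ifP => [_ _|-> //]; apply: ltry.
Qed.

Lemma open_mono (A : X -> X -> \bar R) (l1 l2 : R) : 0 < l1 -> l1 <= l2 ->
  forall U, aff_open (thresh A l1) U -> aff_open (thresh A l2) U.
Proof.
move=> l10 l12 U oU x Ux; have [a [a0 sa]] := oU x Ux.
have [al|la] := leP a l1.
  exists a; split => //; apply: subset_trans sa.
  apply: subset_trans (E2 _ _ _ _); apply: E1; exact: le_trans l12.
exists l1; split => //; apply: subset_trans sa.
apply: subset_trans (E4 _ _ a _); apply: subset_trans (E2 _ _ _ _).
exact: E1.
Qed.

Lemma open_A (A : X -> X -> \bar R) (l : R) U :
  aff_open (thresh A l) U -> aff_open A U.
Proof.
move=> oU x Ux; have [a [a0 sa]] := oU x Ux.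
by exists a; split => //; apply: subset_trans sa; apply: E2.
Qed.

Lemma sep_false {U V : set X} {a} : U `&` V = set0 -> U a -> V a -> False.
Proof. by move=> UV Ua Va; have: (U `&` V) a by []; rewrite UV. Qed.

Lemma core {op : set X -> Prop} {S U V p s} : top_connected op S -> op U -> op V ->
  U `&` V = set0 -> S `<=` U `|` V -> S p -> U p -> S s -> V s -> False.
Proof.
move=> cS oU oV UV sS Sp Up Ss Vs; apply: cS.
by exists U, V; split=> //; split=> //; split=> //; split=> //; split;
  [exists p | exists s].
Qed.

Lemma single_conn (op : set X -> Prop) x : top_connected op [set x].
Proof.
move=> [U [V [_ [_ [UV [_ [[u [Uu /= eu]] [v [Vv /= ev]]]]]]]]].
by subst; apply: (sep_false UV Uu Vv).
Qed.

Lemma comp_in (op : set X -> Prop) x : component op x x.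
Proof. by exists [set x] => //; split => //; apply: single_conn. Qed.

Lemma comp_sub {op : set X -> Prop} {S x} : top_connected op S -> S x ->
  S `<=` component op x.
Proof. by move=> cS Sx y Sy; exists S. Qed.

Lemma comp_conn (op : set X -> Prop) x : top_connected op (component op x).
Proof.
move=> [U [V [oU [oV [UV [sub [[u [Uu [S [cS Sx] Su]]] [v [Vv [T [cT Tx] Tv]]]]]]]]]].
have sS : S `<=` U `|` V by move=> y Sy; apply: sub; exists S.
have sT : T `<=` U `|` V by move=> y Ty; apply: sub; exists T.
case: (sub x (comp_in op x)) => [Ux|Vx].
  exact: (core cT oU oV UV sT Tx Ux Tv Vv).
have VU : V `&` U = set0 by rewrite setIC.
have sS' : S `<=` V `|` U by move=> y /sS; rewrite setUC.
exact: (core cS oV oU VU sS' Sx Vx Su Uu).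
Qed.

Lemma comp_eq {op : set X -> Prop} {x y} : component op x y ->
  component op y = component op x.
Proof.
move=> cxy.
have h1 : component op x `<=` component op y := comp_sub (comp_conn op x) cxy.
have h2 : component op y `<=` component op x :=
  comp_sub (comp_conn op y) (h1 _ (comp_in op x)).
by apply/seteqP; split.
Qed.

Lemma conn_mono (op1 op2 : set X -> Prop) S : (forall U, op1 U -> op2 U) ->
  top_connected op2 S -> top_connected op1 S.
Proof.
move=> h c [U [V [oU [oV rest]]]]; apply: c; exists U, V.
by split; [apply: h|split; [apply: h|]].
Qed.

Lemma comp_mono {op1 op2 : set X -> Prop} {x} : (forall U, op1 U -> op2 U) ->
  component op2 x `<=` component op1 x.
Proof. by move=> h y [S [cS Sx] Sy]; exists S => //; split => //; apply: conn_mono h cS. Qed.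

Lemma card_comp (op1 op2 : set X -> Prop) : (forall U, op1 U -> op2 U) ->
  components op1 #<= components op2.
Proof.
move=> h; apply: (card_le_trans _ (card_image_le
  (fun C => \bigcup_(y in C) component op1 y) (components op2))).
apply: subset_card_le.
move=> C [x ->]; exists (component op2 x); first by exists x.
apply/seteqP; split.
  by move=> z [y cy]; rewrite (comp_eq (comp_mono h _ cy)).
by move=> z cz; exists x => //; apply: comp_in.
Qed.

Lemma fin_ub (s : seq R) : exists M, forall r, r \in s -> r <= M.
Proof.
elim: s => [|a s [M hM]]; first by exists 0.
exists (Num.max a M) => r; rewrite in_cons => /orP[/eqP ->|/hM rM].
  by rewrite le_max lexx.
by rewrite le_max rM orbT.
Qed.

End Helpers.

Theorem mainTheorem5 (R : realType) (X : Type) (A : X -> X -> \bar R)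
  (hA : is_affinity A) :
  (* (a) *)
  (forall l1 l2 : R, 0 < l1 -> l1 < l2 ->
     (forall U : set X, aff_open (thresh A l1) U -> aff_open (thresh A l2) U) /\
     (forall U : set X, aff_open (thresh A l2) U -> aff_open A U)) /\
  (* (b) *)
  (forall l1 l2 : R, 0 < l1 -> l1 <= l2 ->
     components (aff_open (thresh A l1)) #<= components (aff_open (thresh A l2))) /\
  (forall l : R, 0 < l ->
     components (aff_open (thresh A l)) #<= components (aff_open A)) /\
  (* (c) *)
  (finite_set [set: X] ->
   exists L : R, 0 < L /\
     forall l : R, L < l ->
       (forall U : set X, aff_open (thresh A l) U <-> aff_open A U) /\
       components (aff_open (thresh A l)) #= components (aff_open A)).
Proof.
Proof.
have [hpos [hsym hdiag]] := hA.
split.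
  move=> l1 l2 l10 l12; split; first by apply: open_mono => //; apply: ltW.
  exact: open_A.
split.
  by move=> l1 l2 l10 l12; apply: card_comp; apply: open_mono.
split.
  by move=> l l0; apply: card_comp; apply: open_A.
move=> finX.
have fimg : finite_set [set fine (A p.1 p.2) | p in [set: X * X]].
  by apply: finite_image; rewrite -setXTT; apply: finite_setX.
have [F hF] := (finite_fsetP.1 fimg).
have [M hM] := @fin_ub R (finmap.enum_fset F).
exists (Num.max M 1); split; first by rewrite lt_max ltr01 orbT.
move=> l Ll.
have eqA : thresh A l = A.
  apply/funext => x; apply/funext => y; rewrite /thresh; case: ifP => // h.
  move: h; case E: (A x y) => [r| |] //= h.
  have : r \in finmap.enum_fset F.
    have : [set fine (A p.1 p.2) | p in [set: X * X]] r.
      by exists (x, y) => //=; rewrite E.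
    by rewrite hF.
  move=> /hM rM.
  have rl : r < l.
    apply: le_lt_trans Ll. by rewrite le_max rM.
  exfalso; move: h; rewrite lte_fin => h. have := lt_trans h rl. by rewrite ltxx.
rewrite eqA; split => // U; exact: card_eqxx.
Qed.
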